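(* Let $\varepsilon>0$ be a constant, $C=12/\varepsilon$, $c=1/(8e)$, and let $k\geq 2$ be a constant integer. Let $G=(V,E)$ be a graph on $n$ vertices with $\delta(G)\geq\left(\frac12+\varepsilon\right)n$, and let $L\subseteq V$ be a set with $|L|\leq C\log n$ such that every pair of distinct vertices of $V\setminus L$ has at least $12\log n$ common $G$-neighbors in $L$. Let $G_k'$ be the subgraph of $G_k$ induced by $V\setminus L$. Then with high probability: every component of $G_k'$ has at least $cn$ vertices, and moreover, for every set $A$ of $k-1$ vertices, removing $A$ from $G_k'$ produces a graph each of whose components is either an isolated vertex or has at least $cn$ vertices.
   Context: The random graph $G_k$ on vertex set $V$: each vertex $v\in V$ independently makes $k$ choices, each uniformly at random from the $G$-neighborhood of $v$ (with replacement), and $G_k$ has edge $\{v,w\}$ whenever $v$ chose $w$ or $w$ chose $v$. ''With high probability'' means with probability tending to $1$ as $n\to\infty$. $\log$ is the natural logarithm. *)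

(* Defs.v *)
From Stdlib Require Import Reals.
From mathcomp Require Import all_boot.
Set Implicit Arguments. Unset Strict Implicit. Unset Printing Implicit Defensive.

Open Scope R_scope.

Definition Rleb (a b : R) : bool := if Rle_dec a b then true else false.

Definition nbhd (n : nat) (e : rel 'I_n) (v : 'I_n) : {set 'I_n} :=
  [set w | e v w].

(* An outcome of the random process: vertex v's i-th choice is w v i. *)
Definition choices (n k : nat) := {ffun 'I_n -> {ffun 'I_k -> 'I_n}}.

(* Sample space: every choice of v lies in the G-neighbourhood of v.
   The process (independent uniform choices with replacement) is exactly
   the uniform distribution on this product set. *)
Definition Omega (n k : nat) (e : rel 'I_n) : {set choices n k} :=
  [set w : choices n k | [forall v, forall i, e v (w v i)]].

Definition prob (n k : nat) (e : rel 'I_n) (E : pred (choices n k)) : R :=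
  INR #|[set w in @Omega n k e | E w]| / INR #|@Omega n k e|.

Definition gk (n k : nat) (w : choices n k) : rel 'I_n :=
  fun v u => [exists i, w v i == u] || [exists i, w u i == v].

Definition induced (n : nat) (S : {set 'I_n}) (r : rel 'I_n) : rel 'I_n :=
  fun x y => [&& x \in S, y \in S & r x y].

Definition comp (n : nat) (S : {set 'I_n}) (r : rel 'I_n) (v : 'I_n) : {set 'I_n} :=
  [set u | connect (induced S r) v u].

Definition c_const : R := / (8 * exp 1).

Definition good_event (n k : nat) (L : {set 'I_n}) (w : choices n k) : bool :=
  let S := ~: L in
  let r := gk w in
  [forall v in S, Rleb (c_const * INR n) (INR #|comp S r v|)] &&
  [forall A : {set 'I_n}, ((A \subset S) && (#|A| == k.-1)) ==>
     [forall v in S :\: A,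
        (#|comp (S :\: A) r v| == 1)%N || Rleb (c_const * INR n) (INR #|comp (S :\: A) r v|)]].

(* Main.v *)
From HB Require Import structures.
From Stdlib Require Import Reals Lra Lia.
From mathcomp Require Import all_boot.
From mathcomp Require Import zify.
Require Import Defs.
Open Scope R_scope.

Lemma exp_pow_mul (x : R) (j : nat) : exp x ^ j = exp (INR j * x).
Proof.
elim: j => [|j IH]; first by rewrite /= Rmult_0_l exp_0.
rewrite S_INR /= IH -exp_plus; f_equal; ring.
Qed.

Lemma pow_le_exp (x : R) (j : nat) : 0 <= x -> (0 < j)%N -> (x / INR j) ^ j <= exp x.
Proof.
move=> hx hj.
have hJ : 0 < INR j by apply: lt_0_INR; apply/ltP.
have -> : exp x = exp (x / INR j) ^ j by rewrite exp_pow_mul; f_equal; field; lra.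
apply: pow_incr; split.
  apply: Rmult_le_pos; [lra | left; apply: Rinv_0_lt_compat; lra].
have := exp_ineq1_le (x / INR j); lra.
Qed.

Lemma pow_le1 (z : R) (j : nat) : 0 <= z <= 1 -> z ^ j <= 1.
Proof.
move=> [h0 h1]; elim: j => [|j IH] /=; first lra.
have := pow_le z j h0; nra.
Qed.

Lemma pow_decr (z : R) (i j : nat) : 0 <= z <= 1 -> (i <= j)%N -> z ^ j <= z ^ i.
Proof.
move=> hz /subnK <-; rewrite pow_add.
have := @pow_le1 z (j - i) hz; have := pow_le z i (proj1 hz); nra.
Qed.

Lemma stirling (s : nat) : INR s ^ s <= exp (INR s) * INR (s`!).
Proof.
elim: s => [|s IH]; first by rewrite /= exp_0; lra.
have key : INR s.+1 ^ s <= exp 1 * INR s ^ s.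
  case: s IH => [|s] IH; first by rewrite /=; have := exp_ineq1_le 1; lra.
  have hs : 0 < INR s.+1 by apply: lt_0_INR; lia.
  have -> : INR s.+2 = INR s.+1 * (1 + / INR s.+1).
    rewrite (S_INR s.+1); field; lra.
  rewrite Rpow_mult_distr.
  have hb : (1 + / INR s.+1) ^ s.+1 <= exp 1.
    have -> : exp 1 = exp (/ INR s.+1) ^ s.+1.
      by rewrite exp_pow_mul; f_equal; field; lra.
    apply: pow_incr; split.
      have := Rinv_0_lt_compat _ hs; lra.
    have := exp_ineq1_le (/ INR s.+1); lra.
  have := pow_le (INR s.+1) s.+1 (ltac:(lra)); nra.
rewrite factS mult_INR.
have -> : exp (INR s.+1) = exp (INR s) * exp 1 by rewrite S_INR exp_plus.
rewrite [INR s.+1 ^ s.+1]/= .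
have h1 : 0 <= INR s.+1 by apply: pos_INR.
have h2 : 0 <= exp 1 by have := exp_pos 1; lra.
have h3 : INR s.+1 * INR s.+1 ^ s <= INR s.+1 * (exp 1 * INR s ^ s) by apply: Rmult_le_compat_l.
have h4 : INR s.+1 * (exp 1 * INR s ^ s) <= INR s.+1 * (exp 1 * (exp (INR s) * INR s`!)).
  apply: Rmult_le_compat_l => //; apply: Rmult_le_compat_l => //.
apply: (Rle_trans _ _ _ h3); apply: (Rle_trans _ _ _ h4); right; ring.
Qed.

Lemma expn_mono (a b j : nat) : (a <= b)%N -> (a ^ j <= b ^ j)%N.
Proof. by move=> h; case: j => [|j] //; rewrite leq_exp2r. Qed.

Lemma ffact_le_exp (n m : nat) : (n ^_ m <= n ^ m)%N.
Proof.
elim: m n => [|m IH] n; first by [].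
rewrite ffactnS expnS; apply: leq_mul => //.
apply: leq_trans (IH n.-1) _; apply: expn_mono; lia.
Qed.

Lemma bin_le_exp (n s : nat) : ('C(n, s) <= n ^ s)%N.
Proof.
apply: leq_trans (ffact_le_exp n s); rewrite -bin_ffact.
by rewrite -{1}[X in (X <= _)%N]muln1 leq_mul2l fact_gt0 orbT.
Qed.

Lemma INR_expn (a j : nat) : INR (a ^ j)%N = INR a ^ j.
Proof. elim: j => [|j IH] //; by rewrite expnS mult_INR IH. Qed.

Lemma binR_le (n s : nat) : INR 'C(n, s) <= INR n ^ s.
Proof. by rewrite -INR_expn; apply: le_INR; apply/leP; apply: bin_le_exp. Qed.

Lemma binR_stir (n s : nat) : (0 < s)%N ->
  INR 'C(n, s) <= (exp 1 * INR n / INR s) ^ s.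
Proof.
move=> hs.
have hS : 0 < INR s by apply: lt_0_INR; apply/ltP.
have hF : 0 < INR s`! by apply: lt_0_INR; apply/ltP; apply: fact_gt0.
have h1 : INR 'C(n, s) * INR s`! <= INR n ^ s.
  rewrite -mult_INR -INR_expn; apply: le_INR; apply/leP.
  by rewrite multE bin_ffact; apply: ffact_le_exp.
have h2 := stirling s.
have hSs : 0 < INR s ^ s by apply: pow_lt.
rewrite /Rdiv !Rpow_mult_distr exp_pow_mul Rmult_1_r pow_inv.
have hC : 0 <= INR 'C(n, s) by apply: pos_INR.
have hN : 0 <= INR n ^ s by apply: pow_le; apply: pos_INR.
apply: (Rmult_le_reg_r (INR s ^ s)) => //.
rewrite Rmult_assoc Rinv_l; last lra.
apply: (Rmult_le_reg_r (INR s`!)) => //.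
have : INR 'C(n, s) * INR s ^ s <= INR 'C(n, s) * (exp (INR s) * INR s`!).
  by apply: Rmult_le_compat_l.
have : INR 'C(n, s) * INR s`! * exp (INR s) <= INR n ^ s * exp (INR s).
  by apply: Rmult_le_compat_r => //; left; apply: exp_pos.
nra.
Qed.

Lemma exp_fifth : exp (1/5) <= 32/25.
Proof.
apply: Rnot_lt_le => h.
have h0 : 0 <= 32/25 by lra.
have : (32/25) ^ 5 <= exp (1/5) ^ 5 by apply: pow_incr; lra.
rewrite exp_pow_mul.
have -> : INR 5 * (1/5) = 1 by rewrite /=; field.
have := exp_le_3; rewrite /=; lra.
Qed.

Lemma e_gt2 : 2 < exp 1.
Proof. have := exp_ineq1 1; lra. Qed.

Lemma c_pos : 0 < c_const.
Proof. rewrite /c_const; apply: Rinv_0_lt_compat; have := e_gt2; lra. Qed.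

Lemma base_bound (k : nat) : (2 <= k)%N ->
  exp 1 * (5/2) ^ k * c_const ^ k.-1 <= 25/32.
Proof.
move=> hk; have [j ->] : exists j, k = j.+2 by exists (k - 2)%N; lia.
have he := e_gt2.
rewrite /= /c_const.
have -> : exp 1 * (5 / 2 * (5 / 2 * (5 / 2) ^ j)) * (/ (8 * exp 1) * (/ (8 * exp 1)) ^ j)
  = 25/32 * ((5/2) ^ j * (/ (8 * exp 1)) ^ j) by field; lra.
rewrite -Rpow_mult_distr.
have : (5 / 2 * / (8 * exp 1)) ^ j <= 1.
  apply: pow_le1; split.
    apply: Rmult_le_pos; first lra; left; apply: Rinv_0_lt_compat; lra.
  apply: (Rmult_le_reg_r (8 * exp 1)); first lra.
  rewrite Rmult_assoc Rinv_l; lra.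
have := pow_le (5 / 2 * / (8 * exp 1)) j; nra.
Qed.

Lemma RplusA' : associative Rplus.
Proof. by move=> x y z; rewrite Rplus_assoc. Qed.
Lemma RmultA' : associative Rmult.
Proof. by move=> x y z; rewrite Rmult_assoc. Qed.

HB.instance Definition _ := Monoid.isComLaw.Build R 0 Rplus RplusA' Rplus_comm Rplus_0_l.
HB.instance Definition _ := Monoid.isComLaw.Build R 1 Rmult RmultA' Rmult_comm Rmult_1_l.
HB.instance Definition _ := Monoid.isMulLaw.Build R 0 Rmult Rmult_0_l Rmult_0_r.
HB.instance Definition _ := Monoid.isAddLaw.Build R Rmult Rplus Rmult_plus_distr_r Rmult_plus_distr_l.

Section BigR.
Variable I : finType.

Lemma big_Rle (P : pred I) (F G : I -> R) :
  (forall i, P i -> F i <= G i) ->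
  \big[Rplus/0]_(i | P i) F i <= \big[Rplus/0]_(i | P i) G i.
Proof. move=> h; elim/big_ind2: _ => //; [lra | move=> *; lra]. Qed.

Lemma big_Rge0 (P : pred I) (F : I -> R) :
  (forall i, P i -> 0 <= F i) -> 0 <= \big[Rplus/0]_(i | P i) F i.
Proof. move=> h; elim/big_ind: _ => //; [lra | move=> *; lra]. Qed.

Lemma big_Rsub (P : pred I) (F : I -> R) :
  (forall i, 0 <= F i) ->
  \big[Rplus/0]_(i | P i) F i <= \big[Rplus/0]_i F i.
Proof.
move=> h; rewrite big_mkcond /=; apply: big_Rle => i _.
by case: (P i); [lra | apply: h].
Qed.

Lemma big_Rconst (P : pred I) (c : R) :
  \big[Rplus/0]_(i | P i) c = INR #|P| * c.
Proof.
rewrite big_const; elim: #|P| => [|j IH]; first by rewrite /=; ring.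
rewrite iterS IH S_INR; ring.
Qed.

Lemma big_Ror (P Q : pred I) (F : I -> R) :
  (forall i, 0 <= F i) ->
  \big[Rplus/0]_(i | P i || Q i) F i <=
  \big[Rplus/0]_(i | P i) F i + \big[Rplus/0]_(i | Q i) F i.
Proof.
move=> h; rewrite (big_mkcond P) (big_mkcond Q) (big_mkcond (fun i => P i || Q i)) -big_split /=.
apply: big_Rle => i _; have := h i; case: (P i); case: (Q i) => /=; lra.
Qed.

End BigR.

Definition hh (n k : nat) (m : R) (s : nat) : R := (2 * (INR s + m) / INR n) ^ (k * s).

Lemma powk_split (N x : R) (k s : nat) : 0 < N -> (0 < k)%N ->
  N ^ s * (x / N) ^ (k * s) = (x ^ k / N ^ k.-1) ^ s.
Proof.
move=> hN hk.
have hM : N ^ k.-1 <> 0 by apply: pow_nonzero; lra.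
rewrite pow_mult -Rpow_mult_distr; f_equal.
rewrite /Rdiv Rpow_mult_distr pow_inv.
have -> : N ^ k = N * N ^ k.-1 by rewrite -[in LHS](prednK hk).
field; split => //; lra.
Qed.

Lemma small_term (n k s : nat) (x m : R) :
  (1 <= n)%N -> (2 <= k)%N -> (2 <= s)%N -> 0 <= m ->
  2 * (INR s + m) <= x -> 1 <= x -> (x ^ k) ^ 3 <= INR n ->
  INR 'C(n, k.-1) * (INR 'C(n, s) * hh n k m s) <=
  (if s == 2%N then (x ^ k) ^ 3 / INR n else (x ^ k) ^ 3 / (INR n * INR n)).
Proof.
move=> hn hk hs hm hx hx1 hu3.
set N := INR n; set u := x ^ k; set M := N ^ k.-1.
rewrite -/N -/u in hu3.
have hN : 1 <= N by rewrite /N -/(INR 1); apply: le_INR; apply/leP.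
have hMN : N <= M by rewrite /M -{1}(pow_1 N); apply: Rle_pow => //; apply/leP; lia.
have hu : 1 <= u by apply: pow_R1_Rle.
have hu3' : u <= u ^ 3 by rewrite -{1}(pow_1 u); apply: Rle_pow => //; apply/leP.
have hC1 : INR 'C(n, k.-1) <= M by apply: binR_le.
have hC2 : INR 'C(n, s) <= N ^ s by apply: binR_le.
have hsR : 0 <= INR s by apply: pos_INR.
have hb : 0 <= 2 * (INR s + m) / N <= x / N.
  split; first by apply: Rmult_le_pos; [lra | left; apply: Rinv_0_lt_compat; lra].
  rewrite /Rdiv; apply: Rmult_le_compat_r; [left; apply: Rinv_0_lt_compat; lra | lra].
have hh1 : hh n k m s <= (x / N) ^ (k * s) by apply: pow_incr.
have hh0 : 0 <= hh n k m s by apply: pow_le; case: hb.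
have t1 : INR 'C(n, k.-1) * (INR 'C(n, s) * hh n k m s) <= M * (N ^ s * (x / N) ^ (k * s)).
  apply: Rmult_le_compat => //; try apply: pos_INR.
    by apply: Rmult_le_pos => //; apply: pos_INR.
  apply: Rmult_le_compat => //; apply: pos_INR.
rewrite powk_split in t1; [|lra|lia].
rewrite -/u -/M in t1.
have hM0 : 0 < M by lra.
have hz : 0 <= u / M <= 1.
  split; first by apply: Rmult_le_pos; [lra | left; apply: Rinv_0_lt_compat; lra].
  apply: (Rmult_le_reg_r M) => //; rewrite /Rdiv Rmult_assoc Rinv_l; lra.
case: eqP => [hs2 | hs2].
  subst s.
  apply: (Rle_trans _ _ _ t1).
  have -> : M * (u / M) ^ 2 = u ^ 2 / M by rewrite /=; field; lra.
  have hu2 : u ^ 2 <= u ^ 3 by apply: Rle_pow => //; apply/leP.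
  apply: Rle_trans (_ : u ^ 3 / M <= _).
    apply: Rmult_le_compat_r; [left; apply: Rinv_0_lt_compat; lra | lra].
  apply: Rmult_le_compat_l; first by apply: pow_le; lra.
  apply: Rinv_le_contravar; lra.
have hs3 : (3 <= s)%N by lia.
apply: (Rle_trans _ _ _ t1).
apply: Rle_trans (_ : M * (u / M) ^ 3 <= _).
  apply: Rmult_le_compat_l; [lra | by apply: pow_decr].
have -> : M * (u / M) ^ 3 = u ^ 3 / (M * M) by rewrite /=; field; lra.
apply: Rmult_le_compat_l; first by apply: pow_le; lra.
apply: Rinv_le_contravar; nra.
Qed.

Lemma exp_mono (a b : R) : a <= b -> exp a <= exp b.
Proof. case/Rle_lt_or_eq_dec => [h|->]; [left; exact: exp_increasing | lra]. Qed.

Lemma large_term (n k s : nat) (m ell : R) :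
  (1 <= n)%N -> (2 <= k)%N -> (1 <= s)%N -> 0 <= m -> 4 * m <= INR s ->
  INR s < c_const * INR n -> (INR k + 2) * ell <= INR s / 5 -> exp ell = INR n ->
  INR 'C(n, k.-1) * (INR 'C(n, s) * hh n k m s) <= / (INR n ^ 3).
Proof.
move=> hn hk hs hm hms hsc hell hexp.
set N := INR n; rewrite -/N in hsc hexp.
have hN : 1 <= N by rewrite /N -/(INR 1); apply: le_INR; apply/leP.
have hS : 1 <= INR s by rewrite -/(INR 1); apply: le_INR; apply/leP.
have hc := c_pos.
set M := N ^ k.-1.
have hM0 : 0 < M by apply: pow_lt; lra.
set x := INR s / N.
have hx0 : 0 < x by apply: Rmult_lt_0_compat; [lra | apply: Rinv_0_lt_compat; lra].
have hxc : x < c_const.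
  apply: (Rmult_lt_reg_r N); first lra.
  rewrite /x /Rdiv Rmult_assoc Rinv_l; lra.
have hC1 : INR 'C(n, k.-1) <= M by apply: binR_le.
have hC2 : INR 'C(n, s) <= (exp 1 * N / INR s) ^ s by apply: binR_stir.
have he := e_gt2.
have hb : 0 <= 2 * (INR s + m) / N <= 5/2 * x.
  split; first by apply: Rmult_le_pos; [lra | left; apply: Rinv_0_lt_compat; lra].
  rewrite /x /Rdiv -Rmult_assoc; apply: Rmult_le_compat_r; [left; apply: Rinv_0_lt_compat; lra | lra].
have hh1 : hh n k m s <= (5/2 * x) ^ (k * s) by apply: pow_incr.
have hh0 : 0 <= hh n k m s by apply: pow_le; case: hb.
have hE0 : 0 <= exp 1 * N / INR s.
  apply: Rmult_le_pos; [nra | left; apply: Rinv_0_lt_compat; lra].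
have t1 : INR 'C(n, k.-1) * (INR 'C(n, s) * hh n k m s) <=
          M * ((exp 1 * N / INR s) ^ s * (5/2 * x) ^ (k * s)).
  apply: Rmult_le_compat => //; try apply: pos_INR.
    by apply: Rmult_le_pos => //; apply: pos_INR.
  apply: Rmult_le_compat => //; apply: pos_INR.
have hbase : (exp 1 * N / INR s) ^ s * (5/2 * x) ^ (k * s) =
             (exp 1 * (5/2) ^ k * x ^ k.-1) ^ s.
  rewrite pow_mult -Rpow_mult_distr; f_equal.
  rewrite Rpow_mult_distr.
  have -> : x ^ k = x * x ^ k.-1 by rewrite -[in LHS](prednK (ltnW hk)).
  rewrite /x; field; lra.
rewrite hbase in t1.
have hbb : 0 <= exp 1 * (5/2) ^ k * x ^ k.-1 <= 25/32.
  split.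
    apply: Rmult_le_pos; [apply: Rmult_le_pos; [lra | apply: pow_le; lra] | apply: pow_le; lra].
  apply: (Rle_trans _ _ _ _ (base_bound k hk)).
  apply: Rmult_le_compat_l; first by apply: Rmult_le_pos; [lra | apply: pow_le; lra].
  apply: pow_incr; lra.
have t2 : (exp 1 * (5/2) ^ k * x ^ k.-1) ^ s <= (25/32) ^ s by apply: pow_incr.
have t3 : (25/32) ^ s * exp (INR s / 5) <= 1.
  have -> : exp (INR s / 5) = exp (1/5) ^ s by rewrite exp_pow_mul; f_equal; field.
  rewrite -Rpow_mult_distr; apply: pow_le1; split.
    by apply: Rmult_le_pos; [lra | left; apply: exp_pos].
  have := exp_fifth; have := exp_pos (1/5); nra.
have t4 : N ^ (k + 2) <= exp (INR s / 5).
  rewrite -hexp exp_pow_mul plus_INR; apply: exp_mono.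
  rewrite [INR 2]/=; lra.
have hNk : N ^ (k + 2) = M * N ^ 3.
  rewrite /M -pow_add; f_equal; lia.
have hN3 : 0 < N ^ 3 by apply: pow_lt; lra.
have hexpp : 0 < exp (INR s / 5) by apply: exp_pos.
apply: (Rle_trans _ _ _ t1).
have t5 : (exp 1 * (5/2) ^ k * x ^ k.-1) ^ s <= / exp (INR s / 5).
  apply: (Rmult_le_reg_r (exp (INR s / 5))) => //.
  rewrite Rinv_l; last lra.
  have := pow_le (25/32) s; nra.
have t6 : / exp (INR s / 5) <= / (M * N ^ 3).
  apply: Rinv_le_contravar; first by apply: Rmult_lt_0_compat.
  by rewrite -hNk.
apply: Rle_trans (_ : M * / (M * N ^ 3) <= _).
  apply: Rmult_le_compat_l; lra.
right; field; lra.
Qed.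

Lemma Rleb_false (a b : R) : ~~ Rleb a b -> b < a.
Proof. by rewrite /Rleb; case: Rle_dec => // h _; lra. Qed.

Lemma analytic (eps : R) (k : nat) (delta : R) : 0 < eps -> (2 <= k)%N -> 0 < delta ->
  exists N : nat, forall n : nat, (N <= n)%N -> forall m : R, 0 <= m ->
    m <= 12 / eps * ln (INR n) + INR k ->
    INR n * hh n k m 1 + INR 'C(n, k.-1) *
      \big[Rplus/0]_(s < n.+1 | (2 <= s)%N && ~~ Rleb (c_const * INR n) (INR s))
         (INR 'C(n, s) * hh n k m s) <= delta.
Proof.
move=> heps hk hdelta.
set d := Rmin delta 1.
have hd0 : 0 < d by apply: Rmin_glb_lt; lra.
have hdd : d <= delta by apply: Rmin_l.
have hd1 : d <= 1 by apply: Rmin_r.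
have hkR : 2 <= INR k.
  have : INR 2 <= INR k by apply: le_INR; apply/leP.
  rewrite [INR 2]/=; lra.
have hepsi : 0 < 12 / eps by apply: Rmult_lt_0_compat; [lra | apply: Rinv_0_lt_compat].
set a := 12 / eps + 1.
set D := 4 * a + 5 * (INR k + 2).
set K := 2 * (D + a).
set Q := (6 * INR k * K) ^ (k * 3).
have hQ : 0 < Q by apply: pow_lt; rewrite /K /D /a; nra.
set Y := Rmax (Rmax (INR k) 1) (2 * ln (8 * Q / d)).
set X := Rmax (exp Y) (8 / d).
have [N0 hN0] := INR_unbounded X.
exists N0 => n hn m hm0 hm.
have hnX : X < INR n.
  have : INR N0 <= INR n by apply: le_INR; apply/leP.
  lra.
have hXY : exp Y <= X by apply: Rmax_l.
have hX8 : 8 / d <= X by apply: Rmax_r.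
have hY1 : Rmax (INR k) 1 <= Y by apply: Rmax_l.
have hYk : INR k <= Y by apply: Rle_trans (Rmax_l _ _) hY1.
have hY2 : 1 <= Y by apply: Rle_trans (Rmax_r _ _) hY1.
have hYQ : 2 * ln (8 * Q / d) <= Y by apply: Rmax_r.
have hexpY := exp_pos Y.
have hnpos : 0 < INR n by lra.
set ell := ln (INR n).
have hexp : exp ell = INR n by apply: exp_ln.
have hell : Y < ell by apply: exp_lt_inv; rewrite hexp; lra.
have hma : m <= a * ell by rewrite -/ell in hm; rewrite /a Rmult_plus_distr_r Rmult_1_l; lra.
set x := K * ell.
have hx1 : 1 <= x by rewrite /x /K /D /a; nra.
have h8n : 8 / d <= INR n by lra.
have hn8 : 8 <= INR n.
  apply: Rle_trans h8n; apply: (Rmult_le_reg_r d) => //; rewrite /Rdiv Rmult_assoc Rinv_l; lra.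
have hn1 : (1 <= n)%N by apply/leP; apply: INR_le; rewrite [INR 1]/=; lra.
have hn2 : (2 <= n)%N by apply/leP; apply: INR_le; rewrite [INR 2]/=; lra.
have hP : (x ^ k) ^ 3 <= d * INR n / 8.
  have hk3 : (0 < k * 3)%N by lia.
  have hj : 0 < INR (k * 3) by apply: lt_0_INR; apply/ltP.
  have e1 : (x ^ k) ^ 3 = Q * ((ell / 2) / INR (k * 3)) ^ (k * 3).
    rewrite -pow_mult /Q -Rpow_mult_distr; f_equal.
    rewrite /x mult_INR [INR 3]/=; field; lra.
  have e2 : ((ell / 2) / INR (k * 3)) ^ (k * 3) <= exp (ell / 2) by apply: pow_le_exp => //; lra.
  have e3 : 8 * Q / d <= exp (ell / 2).
    rewrite -{1}(exp_ln (8 * Q / d)); last first.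
      by apply: Rmult_lt_0_compat; [lra | apply: Rinv_0_lt_compat].
    apply: exp_mono; lra.
  have e4 : INR n = exp (ell / 2) * exp (ell / 2) by rewrite -exp_plus -hexp; f_equal; field.
  rewrite e1 e4.
  have e5 : Q <= d / 8 * exp (ell / 2).
    apply: (Rmult_le_reg_r (8 / d)); first by apply: Rmult_lt_0_compat; [lra | apply: Rinv_0_lt_compat].
    have -> : d / 8 * exp (ell / 2) * (8 / d) = exp (ell / 2) by field; lra.
    have -> : Q * (8 / d) = 8 * Q / d by field; lra.
    done.
  have := exp_pos (ell / 2); have := pow_le ((ell / 2) / INR (k * 3)) (k * 3).
  have : 0 <= ell / 2 / INR (k * 3).
    apply: Rmult_le_pos; [lra | left; apply: Rinv_0_lt_compat; lra].
  move=> h0 h1 h2; nra.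
have hu1 : 1 <= x ^ k by apply: pow_R1_Rle.
have hu3 : x ^ k <= (x ^ k) ^ 3 by rewrite -{1}(pow_1 (x ^ k)); apply: Rle_pow => //; apply/leP.
have hPn : (x ^ k) ^ 3 <= INR n.
  apply: Rle_trans hP _; have := Rmult_le_compat_r (INR n / 8) d 1; rewrite Rmult_1_l; nra.
set P := (x ^ k) ^ 3.
have hDl : 10 <= D * ell by rewrite /D /a; nra.
have hS1 : INR n * hh n k m 1 <= P / INR n.
  have hb : 0 <= 2 * (INR 1 + m) / INR n <= x / INR n.
    rewrite [INR 1]/=; split.
      apply: Rmult_le_pos; [lra | left; apply: Rinv_0_lt_compat; lra].
    rewrite /Rdiv; apply: Rmult_le_compat_r; [left; apply: Rinv_0_lt_compat; lra | ].
    rewrite /x /K; nra.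
  have h1 : hh n k m 1 <= (x / INR n) ^ (k * 1) by apply: pow_incr.
  apply: Rle_trans (_ : INR n ^ 1 * (x / INR n) ^ (k * 1) <= _).
    rewrite pow_1; apply: Rmult_le_compat_l; lra.
  rewrite powk_split; [|lra|lia].
  rewrite pow_1.
  have hM : INR n <= INR n ^ k.-1.
    rewrite -{1}(pow_1 (INR n)); apply: Rle_pow; [lra | apply/leP; lia].
  apply: Rle_trans (_ : x ^ k / INR n <= _).
    apply: Rmult_le_compat_l; first lra.
    apply: Rinv_le_contravar; lra.
  rewrite /Rdiv; apply: Rmult_le_compat_r; [left; apply: Rinv_0_lt_compat; lra | rewrite /P; lra].
have hxe : x = 2 * (D * ell) + 2 * (a * ell) by rewrite /x /K; ring.
have hDe : D * ell = 4 * (a * ell) + 5 * ((INR k + 2) * ell) by rewrite /D; ring.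
have hkl : 0 <= (INR k + 2) * ell by nra.
have hn3 : 0 < INR n ^ 3 by apply: pow_lt.
have hi2 : nat_of_ord (inord 2 : 'I_n.+1) = 2%N by rewrite inordK //; lia.
set g := fun s : 'I_n.+1 => if (2 <= s)%N && ~~ Rleb (c_const * INR n) (INR s)
   then INR 'C(n, k.-1) * (INR 'C(n, s) * hh n k m s) else 0.
have hg0 : forall s, 0 <= g s.
  move=> s; rewrite /g; case: ifP => _; last lra.
  apply: Rmult_le_pos; first exact: pos_INR.
  apply: Rmult_le_pos; first exact: pos_INR.
  apply: pow_le; apply: Rmult_le_pos; [have := pos_INR s; lra | left; apply: Rinv_0_lt_compat; lra].
have hg2 : g (inord 2) <= P / INR n.
  rewrite /g; case: ifP => [/andP [h2 hc] | _]; last first.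
    by apply: Rmult_le_pos; [rewrite /P; lra | left; apply: Rinv_0_lt_compat].
  have := @small_term n k (inord 2) x m hn1 hk h2 hm0.
  rewrite hi2 eqxx [INR 2]/=; apply => //; lra.
have hg : forall s : 'I_n.+1, s != inord 2 -> g s <= P / (INR n * INR n) + / INR n ^ 3.
  move=> s hs2; rewrite /g; case: ifP => [/andP [h2 hc] | _]; last first.
    have : 0 <= P / (INR n * INR n).
      by apply: Rmult_le_pos; [rewrite /P; lra | left; apply: Rinv_0_lt_compat; nra].
    have := Rinv_0_lt_compat _ hn3; lra.
  have hsn2 : (nat_of_ord s != 2)%N.
    apply: contra hs2 => /eqP h; apply/eqP; apply: val_inj; by rewrite /= hi2.
  have hcs := @Rleb_false _ _ hc.
  case: (Rlt_le_dec (INR s) (D * ell)) => hsD.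
    have := @small_term n k s x m hn1 hk h2 hm0.
    rewrite (negbTE hsn2) => h; apply: Rle_trans (h _ _ _) _.
    all: try (rewrite /P; lra).
    rewrite /P; have := Rinv_0_lt_compat _ hn3; lra.
  have hs1 : (1 <= s)%N by lia.
  have := @large_term n k s m ell hn1 hk hs1 hm0.
  move=> h; apply: Rle_trans (h _ _ _ _) _; try lra.
  have : 0 <= P / (INR n * INR n).
    by apply: Rmult_le_pos; [rewrite /P; lra | left; apply: Rinv_0_lt_compat; nra].
  lra.
have hsum : \big[Rplus/0]_(s < n.+1 | (2 <= s)%N && ~~ Rleb (c_const * INR n) (INR s))
      (INR 'C(n, k.-1) * (INR 'C(n, s) * hh n k m s))
    <= P / INR n + (INR n + 1) * (P / (INR n * INR n) + / INR n ^ 3).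
  rewrite big_mkcond -/g (bigD1 (inord 2)) //.
  apply: Rplus_le_compat => //.
  apply: Rle_trans (_ : \big[Rplus/0]_(s < n.+1 | s != inord 2) (P / (INR n * INR n) + / INR n ^ 3) <= _).
    by apply: big_Rle.
  have hB : 0 <= P / (INR n * INR n) + / INR n ^ 3.
    have : 0 <= P / (INR n * INR n).
      by apply: Rmult_le_pos; [rewrite /P; lra | left; apply: Rinv_0_lt_compat; nra].
    have := Rinv_0_lt_compat _ hn3; lra.
  apply: Rle_trans (_ : \big[Rplus/0]_(s < n.+1) (P / (INR n * INR n) + / INR n ^ 3) <= _).
    by apply: big_Rsub.
  rewrite big_Rconst card_ord S_INR; lra.
rewrite big_distrr /=.
set t := / INR n.
have ht0 : 0 < t by apply: Rinv_0_lt_compat.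
have hnt : INR n * t = 1 by rewrite /t Rinv_r; lra.
have htd : t <= d / 8.
  apply: (Rmult_le_reg_l (INR n)) => //; rewrite hnt.
  have : 8 / d * d <= INR n * d by apply: Rmult_le_compat_r; lra.
  have -> : 8 / d * d = 8 by field; lra.
  lra.
have hPt : P * t <= d / 8.
  apply: (Rmult_le_reg_l (INR n)) => //.
  have -> : INR n * (P * t) = P by rewrite -Rmult_assoc (Rmult_comm (INR n)) Rmult_assoc hnt Rmult_1_r.
  rewrite /P; lra.
have e1 : P / INR n = P * t by [].
have e2 : P / (INR n * INR n) = P * t * t by rewrite /Rdiv Rinv_mult /t; ring.
have e3 : / INR n ^ 3 = t * t * t by rewrite -pow_inv /t /=; ring.
rewrite e1 e2 e3 in hS1 hsum.
have hP0 : 0 <= P by rewrite /P; lra.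
have e4 : (INR n + 1) * (P * t * t + t * t * t) = P * t + t * t + (P * t) * t + t * t * t.
  have -> : (INR n + 1) * (P * t * t + t * t * t) = (INR n * t) * (P * t + t * t) + (P * t * t + t * t * t) by ring.
  rewrite hnt; ring.
rewrite e4 in hsum.
have ht1 : t <= 1 / 8 by lra.
have : P * t * t <= d / 8 * (1/8) by apply: Rmult_le_compat => //; nra.
have : t * t <= d / 8 * (1/8) by apply: Rmult_le_compat => //; lra.
have : t * t * t <= d / 8 * (1/8) * (1/8).
  apply: Rmult_le_compat => //; try nra.
move=> *; apply: Rle_trans (Rplus_le_compat _ _ _ _ hS1 hsum) _.
lra.
Qed.
Definition EV {n k : nat} (T X : {set 'I_n}) : pred (choices n k) :=
  fun w => [forall v in T, forall i, w v i \in T :|: X].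

Lemma prod_foldr (I : finType) (f : I -> nat) :
  foldr muln 1%N [seq f x | x : I] = (\prod_(x : I) f x)%N.
Proof. by rewrite foldrE big_map big_enum. Qed.

Lemma card_Omega (n k : nat) (e : rel 'I_n) :
  #|Omega k e| = (\prod_(v : 'I_n) #|nbhd e v| ^ k)%N.
Proof.
have -> : #|Omega k e| = #|(family (fun v => ffun_on (nbhd e v)) : simpl_pred {ffun 'I_n -> {ffun 'I_k -> 'I_n}})|.
  apply: eq_card => w; rewrite inE.
  apply/forallP/familyP => h v.
    apply/ffun_onP => i; rewrite inE; exact: (forallP (h v) i).
  apply/forallP => i; have := (ffun_onP (h v)) i; by rewrite inE.
rewrite card_family prod_foldr; apply: eq_bigr => v _; by rewrite card_ffun_on card_ord.
Qed.

Lemma mem_nbhd (n : nat) (e : rel 'I_n) (v u : 'I_n) : (u \in nbhd e v) = e v u.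
Proof. by rewrite inE. Qed.

Lemma card_EVset (n k : nat) (e : rel 'I_n) (T X : {set 'I_n}) :
  #|[set w in Omega k e | EV T X w]| =
  (\prod_(v : 'I_n) #|if v \in T then nbhd e v :&: (T :|: X) else nbhd e v| ^ k)%N.
Proof.
have -> : #|[set w in Omega k e | EV T X w]| =
   #|(family (fun v => ffun_on (if v \in T then nbhd e v :&: (T :|: X) else nbhd e v))
      : simpl_pred {ffun 'I_n -> {ffun 'I_k -> 'I_n}})|.
  apply: eq_card => w; rewrite in_set.
  apply/andP/familyP => [[h1 h2] v | h].
    rewrite inE in h1.
    apply/ffun_onP => i; case: ifP => hv; rewrite ?in_setI mem_nbhd.
      rewrite (forallP (forallP h1 v) i) /=.
      by have := forallP h2 v; rewrite hv /= => /forallP.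
    exact: (forallP (forallP h1 v) i).
  split.
    rewrite inE; apply/forallP => v; apply/forallP => i; have := (ffun_onP (h v)) i.
    by case: ifP => _; rewrite ?in_setI mem_nbhd // => /andP [].
  apply/forallP => v; apply/implyP => hv; apply/forallP => i; have := (ffun_onP (h v)) i.
  by rewrite hv in_setI => /andP [].
rewrite card_family prod_foldr; apply: eq_bigr => v _; by rewrite card_ffun_on card_ord.
Qed.

Lemma card_EV (n k : nat) (e : rel 'I_n) (T X : {set 'I_n}) :
  (forall v, n <= 2 * #|nbhd e v|)%N ->
  (#|[set w in Omega k e | EV T X w]| * n ^ (k * #|T|) <=
   #|Omega k e| * (2 * #|T :|: X|) ^ (k * #|T|))%N.
Proof.
move=> hdeg.
rewrite card_EVset card_Omega !expnM -!prod_nat_const !(big_mkcond (fun v => v \in T)) -!big_split /=.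
apply: leq_prod => v _; case: ifP => hv; last by rewrite !muln1.
rewrite -!expnMn; apply: expn_mono.
rewrite mulnA [X in (_ <= X)%N]mulnC.
apply: leq_mul; first by apply: subset_leq_card; apply: subsetIr.
by rewrite mulnC; apply: hdeg.
Qed.

Lemma Omega_pos (n k : nat) (e : rel 'I_n) :
  (forall v, 0 < #|nbhd e v|)%N -> (0 < #|Omega k e|)%N.
Proof.
move=> h; rewrite card_Omega prodn_gt0 // => v; by rewrite expn_gt0 h.
Qed.

Lemma prob_EV (n k : nat) (e : rel 'I_n) (T X : {set 'I_n}) :
  (forall v, n <= 2 * #|nbhd e v|)%N -> (0 < n)%N -> (0 < #|Omega k e|)%N ->
  INR #|[set w in Omega k e | EV T X w]| / INR #|Omega k e| <=
  (2 * INR #|T :|: X| / INR n) ^ (k * #|T|).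
Proof.
move=> hdeg hn hO.
have h := @card_EV n k e T X hdeg.
have h2 : 2 * INR #|T :|: X| = INR (2 * #|T :|: X|) by rewrite mult_INR [INR 2]/=; ring.
have hR : INR #|[set w in Omega k e | EV T X w]| * INR n ^ (k * #|T|) <=
          INR #|Omega k e| * (2 * INR #|T :|: X|) ^ (k * #|T|).
  rewrite h2 -!INR_expn -!mult_INR; apply: le_INR; apply/leP; exact: h.
have hO' : 0 < INR #|Omega k e| by apply: lt_0_INR; apply/ltP.
have hn' : 0 < INR n by apply: lt_0_INR; apply/ltP.
have hnj : 0 < INR n ^ (k * #|T|) by apply: pow_lt.
rewrite /Rdiv Rpow_mult_distr pow_inv.
apply: (Rmult_le_reg_r (INR #|Omega k e|)) => //.
rewrite Rmult_assoc Rinv_l; last lra.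
apply: (Rmult_le_reg_r (INR n ^ (k * #|T|))) => //.
have -> : (2 * INR #|T :|: X|) ^ (k * #|T|) * / INR n ^ (k * #|T|) * INR #|Omega k e| * INR n ^ (k * #|T|)
  = INR #|Omega k e| * (2 * INR #|T :|: X|) ^ (k * #|T|) by field; lra.
lra.
Qed.

Lemma union_bound (I U : finType) (cond : pred I) (A : {set U}) (F : I -> {set U}) :
  (forall w, w \in A -> exists2 i, cond i & w \in F i) ->
  (#|A| <= \sum_(i | cond i) #|F i|)%N.
Proof.
move=> h; rewrite -sum1_card.
apply: leq_trans (_ : (\sum_(w in A) \sum_(i | cond i) (w \in F i) <= _)%N).
  apply: leq_sum => w hw; have [i hi hwi] := h w hw.
  by rewrite (bigD1 i) //= hwi leq_addr.
rewrite exchange_big; apply: leq_sum => i _.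
apply: leq_trans (_ : (\sum_w (w \in F i) <= _)%N).
  rewrite [X in (X <= _)%N]big_mkcond; apply: leq_sum => w _; by case: (w \in A).
rewrite -sum1_card [X in (_ <= X)%N]big_mkcond; apply: eq_leq; apply: eq_bigr => w _; by case: (w \in F i).
Qed.

Lemma comp_self (n : nat) (S' : {set 'I_n}) (r : rel 'I_n) v : v \in comp S' r v.
Proof. by rewrite inE connect0. Qed.

Lemma comp_in (n : nat) (S' : {set 'I_n}) (r : rel 'I_n) v u :
  v \in S' -> u \in comp S' r v -> u \in S'.
Proof.
move=> hv; rewrite inE => /connectP [p hp ->].
elim: p v hv hp => [|y p IH] v hv //=.
case/andP => /and3P [_ hy _] hp; exact: IH y hy hp.
Qed.

Arguments comp_in {n S' r v u}.

Lemma comp_closed (n k : nat) (S' : {set 'I_n}) (w : choices n k) v :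
  v \in S' -> EV (comp S' (gk w) v) (~: S') w.
Proof.
move=> hv; apply/forallP => u; apply/implyP => hu; apply/forallP => i.
rewrite in_setU in_setC; case hx: (w u i \in S'); last by rewrite orbT.
have huS : u \in S' := comp_in hv hu.
rewrite orbF; move: hu; rewrite !inE => hu.
apply: connect_trans hu (connect1 _).
apply/and3P; split => //.
by rewrite /gk; apply/orP; left; apply/existsP; exists i.
Qed.

Arguments comp_closed {n k S'} w {v}.

Lemma EV_mono (n k : nat) (w : choices n k) (T X Y : {set 'I_n}) :
  X \subset Y -> EV T X w -> EV T Y w.
Proof.
move=> hXY /forallP h; apply/forallP => v; apply/implyP => hv; apply/forallP => i.
have := forallP (implyP (h v) hv) i; rewrite !in_setU => /orP [->//|hx].
by rewrite (subsetP hXY _ hx) orbT.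
Qed.

Definition cond (n k : nat) (P : {set 'I_n} * {set 'I_n}) : bool :=
  ((P.1 == set0) && (#|P.2| == 1%N)) ||
  [&& #|P.1| == k.-1, (2 <= #|P.2|)%N & ~~ Rleb (c_const * INR n) (INR #|P.2|)].

Arguments cond {n} k P.

Lemma cover (n k : nat) (e : rel 'I_n) (L : {set 'I_n}) (w : choices n k) :
  (k.-1 <= n)%N -> w \in Omega k e -> ~~ good_event L w ->
  exists2 P, cond k P & w \in [set w in Omega k e | EV P.2 (L :|: P.1) w].
Proof.
move=> hkn hw; rewrite /good_event negb_and => /orP [h | h].
  have [v hv hc] : exists2 v, v \in ~: L & ~~ Rleb (c_const * INR n) (INR #|comp (~: L) (gk w) v|).
    move: h; rewrite negb_forall => /existsP [v]; rewrite negb_imply => /andP [h1 h2].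
    by exists v.
  set T := comp (~: L) (gk w) v.
  have hEV : EV T L w by have := comp_closed w hv; rewrite setCK.
  have hT1 : (1 <= #|T|)%N by apply/card_gt0P; exists v; apply: comp_self.
  case: (eqVneq #|T| 1%N) => hT.
    exists (set0, T); first by rewrite /cond /= eqxx hT.
    by rewrite inE hw /= setU0.
  have [A0 hA0] : exists A0 : {set 'I_n}, #|A0| == k.-1.
    have : (0 < #|[set A : {set 'I_n} | #|A| == k.-1]|)%N by rewrite card_draws card_ord bin_gt0.
    by case/card_gt0P => A; rewrite inE => hA; exists A.
  exists (A0, T).
    rewrite /cond /= hA0 hc andbT /=; apply/orP; right; move: hT => /eqP; move: hT1; case: #|T| => [|[|j]] //.
  rewrite inE hw /=; apply: EV_mono hEV; apply: subsetUl.
move: h; rewrite negb_forall => /existsP [A]; rewrite negb_imply => /andP [/andP [hAS hAk]].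
rewrite negb_forall => /existsP [v]; rewrite negb_imply negb_or => /andP [hv /andP [h1 hc]].
set T := comp (~: L :\: A) (gk w) v.
have hEV : EV T (L :|: A) w.
  have -> : L :|: A = ~: (~: L :\: A) by rewrite setDE setCI !setCK.
  exact (comp_closed w hv).
have hT1 : (1 <= #|T|)%N by apply/card_gt0P; exists v; apply: comp_self.
exists (A, T); last by rewrite inE hw.
rewrite /cond /= hAk hc andbT /=; apply/orP; right.
move: h1 hT1; case: #|T| => [|[|j]] //.
Qed.

Lemma regroup (n : nat) (p : pred nat) (g : nat -> R) :
  \big[Rplus/0]_(T : {set 'I_n} | p #|T|) g #|T| =
  \big[Rplus/0]_(s < n.+1 | p s) (INR 'C(n, s) * g s).
Proof.
have hT : forall T : {set 'I_n}, (#|T| < n.+1)%N.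
  by move=> T; rewrite ltnS; apply: leq_trans (max_card _) _; rewrite card_ord.
rewrite (partition_big (fun T : {set 'I_n} => (inord #|T| : 'I_n.+1)) (fun s : 'I_n.+1 => p s)); last first.
  by move=> T hp; rewrite inordK.
apply: eq_bigr => s hs.
rewrite (eq_bigl (fun T : {set 'I_n} => #|T| == s)); last first.
  move=> T; have e1 : (inord #|T| == s :> 'I_n.+1) = (#|T| == s).
    apply/eqP/eqP => [<-|h]; first by rewrite inordK.
    by apply: val_inj; rewrite /= inordK.
  rewrite e1; case: eqP => [-> | _]; by rewrite ?hs ?andbF.
rewrite (eq_bigr (fun _ => g s)); last by move=> T /eqP ->.
rewrite big_Rconst; congr (INR _ * _).
have := card_draws 'I_n s; rewrite card_ord => <-; apply: eq_card => T; by rewrite inE.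
Qed.

Lemma card_size (n j : nat) : #|(fun T : {set 'I_n} => #|T| == j)| = 'C(n, j).
Proof. have := card_draws 'I_n j; rewrite card_ord => <-; apply: eq_card => T; by rewrite inE. Qed.

Lemma sum_cond_bound (n k : nat) (h : nat -> R) : (forall s, 0 <= h s) ->
  \big[Rplus/0]_(P : {set 'I_n} * {set 'I_n} | cond k P) h #|P.2| <=
  INR n * h 1%N + INR 'C(n, k.-1) *
    \big[Rplus/0]_(s < n.+1 | (2 <= s)%N && ~~ Rleb (c_const * INR n) (INR s)) (INR 'C(n, s) * h s).
Proof.
move=> h0; rewrite /cond.
apply: (Rle_trans _ _ _ (@big_Ror _ (fun P : {set 'I_n} * {set 'I_n} => (P.1 == set0) && (#|P.2| == 1%N))
  (fun P => [&& #|P.1| == k.-1, (2 <= #|P.2|)%N & ~~ Rleb (c_const * INR n) (INR #|P.2|)])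
  (fun P => h #|P.2|) (fun P => h0 _))).
apply: Rplus_le_compat.
  rewrite -(pair_big_dep (fun A : {set 'I_n} => A == set0) (fun A (T : {set 'I_n}) => #|T| == 1%N)
     (fun A (T : {set 'I_n}) => h #|T|)).
  rewrite big_pred1_eq (eq_bigr (fun _ => h 1%N)); last by move=> T /eqP ->.
  by rewrite big_Rconst card_size bin1; right.
rewrite -(pair_big_dep (fun A : {set 'I_n} => #|A| == k.-1)
     (fun A (T : {set 'I_n}) => (2 <= #|T|)%N && ~~ Rleb (c_const * INR n) (INR #|T|))
     (fun A (T : {set 'I_n}) => h #|T|)).
rewrite big_Rconst card_size.
rewrite (regroup n (fun s => (2 <= s)%N && ~~ Rleb (c_const * INR n) (INR s)) h).
by right.
Qed.

Theorem lemma2 (eps : R) (k : nat) :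
  0 < eps -> (2 <= k)%N ->
  forall delta : R, 0 < delta ->
  exists N : nat, forall (n : nat) (e : rel 'I_n) (L : {set 'I_n}),
    (N <= n)%N ->
    symmetric e -> irreflexive e ->
    (forall v : 'I_n, (1/2 + eps) * INR n <= INR #|nbhd e v|) ->
    INR #|L| <= (12 / eps) * ln (INR n) ->
    (forall u w : 'I_n, u \notin L -> w \notin L -> u != w ->
       12 * ln (INR n) <= INR #|[set x in L | e u x && e w x]|) ->
    1 - delta <= @prob n k e (@good_event n k L).
Proof.
move=> heps hk delta hdelta.
have [N hN] := analytic eps k delta heps hk hdelta.
exists (maxn N k) => n e L hn _ _ hdeg hL _.
have hNn : (N <= n)%N by apply: leq_trans hn; apply: leq_maxl.
have hkn : (k <= n)%N by apply: leq_trans hn; apply: leq_maxr.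
have hn0 : (0 < n)%N by lia.
have hnR : 0 < INR n by apply: lt_0_INR; apply/ltP.
have hdeg' : forall v, (n <= 2 * #|nbhd e v|)%N.
  move=> v; apply/leP; apply: INR_le; rewrite mult_INR [INR 2]/=.
  have := hdeg v; nra.
have hdpos : forall v, (0 < #|nbhd e v|)%N by move=> v; have := hdeg' v; lia.
have hO := @Omega_pos n k e hdpos.
have hOR : 0 < INR #|Omega k e| by apply: lt_0_INR; apply/ltP.
have hcard : (#|[set w in Omega k e | good_event L w]| + #|[set w in Omega k e | ~~ good_event L w]|
   = #|Omega k e|)%N.
  rewrite -(cardsID [set w : choices n k | good_event L w] (Omega k e)); congr (_ + _)%N; apply: eq_card => w; rewrite !inE; case: (good_event L w) => /=; rewrite ?andbT ?andbF //.
set m := INR #|L| + INR k.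
have hm0 : 0 <= m by have := pos_INR #|L|; have := pos_INR k; rewrite /m; lra.
have hh0 : forall s, 0 <= hh n k m s.
  move=> s; apply: pow_le; apply: Rmult_le_pos; first by have := pos_INR s; lra.
  left; apply: Rinv_0_lt_compat; lra.
have hunion := @union_bound _ _ (@cond n k) [set w in Omega k e | ~~ good_event L w]
   (fun P => [set w in Omega k e | EV P.2 (L :|: P.1) w]).
have hbad : (#|[set w in Omega k e | ~~ good_event L w]| <=
    \sum_(P | cond k P) #|[set w in Omega k e | EV P.2 (L :|: P.1) w]|)%N.
  apply: hunion => x; rewrite inE => /andP [hx hg].
  exact: (@cover n k e L x (leq_trans (leq_pred k) hkn) hx hg).
have hterm : forall P : {set 'I_n} * {set 'I_n}, cond k P ->
    INR #|[set w in Omega k e | EV P.2 (L :|: P.1) w]| / INR #|Omega k e| <= hh n k m #|P.2|.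
  move=> P hP.
  apply: (Rle_trans _ _ _ (@prob_EV n k e P.2 (L :|: P.1) hdeg' hn0 hO)).
  apply: pow_incr; split.
    apply: Rmult_le_pos; first by have := pos_INR #|P.2 :|: (L :|: P.1)|; lra.
    left; apply: Rinv_0_lt_compat; lra.
  have h1 : (#|P.1| <= k)%N.
    case/orP: hP => [/andP [/eqP -> _] | /and3P [/eqP -> _ _]]; first by rewrite cards0.
    exact: leq_pred.
  have h2 : (#|P.2 :|: (L :|: P.1)| <= #|P.2| + (#|L| + k))%N.
    apply: leq_trans (leq_card_setU _ _).1 _; rewrite leq_add2l.
    apply: leq_trans (leq_card_setU _ _).1 _; by rewrite leq_add2l.
  have h3 : INR #|P.2 :|: (L :|: P.1)| <= INR #|P.2| + m.
    rewrite /m -!plus_INR; apply: le_INR; apply/leP; by rewrite !plusE.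
  rewrite /Rdiv; apply: Rmult_le_compat_r; first by left; apply: Rinv_0_lt_compat.
  lra.
have hsumR : INR #|[set w in Omega k e | ~~ good_event L w]| / INR #|Omega k e| <=
    \big[Rplus/0]_(P : {set 'I_n} * {set 'I_n} | cond k P) hh n k m #|P.2|.
  apply: Rle_trans (_ : INR (\sum_(P | cond k P) #|[set w in Omega k e | EV P.2 (L :|: P.1) w]|)
     / INR #|Omega k e| <= _).
    rewrite /Rdiv; apply: Rmult_le_compat_r; first by left; apply: Rinv_0_lt_compat.
    by apply: le_INR; apply/leP.
  rewrite (big_morph INR plus_INR (erefl (INR 0))) /Rdiv big_distrl /=.
  by apply: big_Rle.
have hfin := Rle_trans _ _ _ hsumR (@sum_cond_bound n k (hh n k m) hh0).
have hm : m <= 12 / eps * ln (INR n) + INR k by rewrite /m; lra.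
have hfin2 := Rle_trans _ _ _ hfin (hN n hNn m hm0 hm).
rewrite /prob.
have : INR #|[set w in Omega k e | good_event L w]| =
       INR #|Omega k e| - INR #|[set w in Omega k e | ~~ good_event L w]|.
  by rewrite -hcard plus_INR; ring.
move=> ->.
have -> : (INR #|Omega k e| - INR #|[set w in Omega k e | ~~ good_event L w]|) / INR #|Omega k e|
  = 1 - INR #|[set w in Omega k e | ~~ good_event L w]| / INR #|Omega k e| by field; lra.
lra.
Qed.
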